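(* The price of equitability is $\Omega(n^2)$ with respect to the \textsc{Min-Sum} objective and $\Omega(n)$ with respect to the \textsc{Min-Max} objective, where $n$ is the number of agents.
   Context: An instance $\mathcal{I}$ has agents $N=[n]$, projects $P$, timesteps $T=[\ell]$, and disapproval sets $D_{ik}\subseteq P$. An outcome is $\mathbf{o}\in P^\ell$ and $d_i(\mathbf{o})=|\{k\in T:o_k\in D_{ik}\}|$. An outcome is equitable if $d_i(\mathbf{o})=d_j(\mathbf{o})$ for all $i,j\in N$. For $W\in\{\textsc{Min-Sum},\textsc{Min-Max}\}$, the $W$-value of $\mathbf{o}$ is $\sum_i d_i(\mathbf{o})$ or $\max_i d_i(\mathbf{o})$ respectively. The price of equitability with respect to $W$ is the supremum, over instances admitting at least one equitable outcome, of the ratio between the minimum $W$-value over equitable outcomes and the minimum $W$-value over all outcomes, considered as a function of $n$. *)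

(* Defs.v *)
From mathcomp Require Import all_boot all_order all_algebra.
Set Implicit Arguments. Unset Strict Implicit. Unset Printing Implicit Defensive.

(* An instance with n agents ('I_n), projects 'I_m, timesteps 'I_l and
   disapproval sets D i k \subseteq P (agent i, timestep k). *)
Definition outcome (m l : nat) := {ffun 'I_l -> 'I_m}.

Definition disutil (n m l : nat) (D : 'I_n -> 'I_l -> {set 'I_m})
  (o : outcome m l) (i : 'I_n) : nat :=
  #|[set k : 'I_l | o k \in D i k]|.

Definition equitable (n m l : nat) (D : 'I_n -> 'I_l -> {set 'I_m})
  (o : outcome m l) : Prop :=
  forall i j : 'I_n, disutil D o i = disutil D o j.

Inductive objective := MinSum | MinMax.

Definition Wvalue (W : objective) (n m l : nat) (D : 'I_n -> 'I_l -> {set 'I_m})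
  (o : outcome m l) : nat :=
  match W with
  | MinSum => (\sum_(i < n) disutil D o i)%N
  | MinMax => (\max_(i < n) disutil D o i)%N
  end.

(* "The price of equitability w.r.t. W is Omega(f(n))": there are c > 0 and N
   such that for every n >= N some instance with n agents admits an equitable
   outcome and has ratio (min W over equitable outcomes)/(min W over all
   outcomes) >= c * f(n).  The optimum over all outcomes is required to be
   positive (if it is 0 the all-zero outcome is equitable and the ratio is 0/0). *)
Definition PoE_Omega (W : objective) (f : nat -> nat) : Prop :=
  exists (c : rat) (N : nat), (0 < c)%R /\
    forall n : nat, (N <= n)%N ->
      exists (m l : nat) (D : 'I_n -> 'I_l -> {set 'I_m}),
        (exists o : outcome m l, equitable D o) /\
        exists oopt : outcome m l,
          (forall o : outcome m l, (Wvalue W D oopt <= Wvalue W D o)%N) /\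
          (0 < Wvalue W D oopt)%N /\
          forall o : outcome m l, equitable D o ->
            (c * (f n)%:R * (Wvalue W D oopt)%:R <= (Wvalue W D o)%:R)%R.

(* Main.v *)
Require Import Defs.
From mathcomp Require Import all_boot all_order all_algebra.
From mathcomp Require Import zify lra.

Definition pp n := (n.-1)./2.
Definition tau n (i : nat) := minn i (pp n).*2.
Definition gA (a : nat) := if a == 0 then 1 else if a <= 2 then a else (a + 3)./2.
Definition ex (a k : nat) : bool := (k == gA a) || ((a == 0) && (k == 2)).
Definition Dn (a k x : nat) : bool := if k == 0 then a == 0 else (x == 1) && ~~ ex a k.
Definition Dinst n : 'I_n -> 'I_(pp n).+2 -> {set 'I_2} :=
  fun i k => [set x : 'I_2 | Dn (tau n i) k x].

Lemma card_as_sum (T : finType) (P : pred T) : #|[set x | P x]| = \sum_(x : T) P x.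
Proof.
rewrite -sum1_card big_mkcond /=; apply: eq_bigr => x _.
by rewrite inE; case: (P x).
Qed.

Lemma disutil_eq n (o : outcome 2 (pp n).+2) (i : 'I_n) :
  disutil (@Dinst n) o i = \sum_(k < (pp n).+2) Dn (tau n i) k (o k).
Proof.
rewrite /disutil card_as_sum; apply: eq_bigr => k _; by rewrite /Dinst inE.
Qed.

Lemma sum_eqh N (h : nat) : \sum_(a < N) (nat_of_ord a == h) = (h < N).
Proof.
elim: N => [|N IH]; first by rewrite big_ord0.
rewrite big_ord_recr /= IH.
case: (ltngtP h N) => H; try lia.
Qed.

Lemma sum_bool_compl N (f : nat -> bool) :
  \sum_(a < N) ~~ f a = N - \sum_(a < N) f a.
Proof.
have : \sum_(a < N) f a + \sum_(a < N) ~~ f a = N.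
  rewrite -big_split /=.
  rewrite (eq_bigr (fun _ => 1)); first by rewrite sum1_card card_ord.
  by move=> a _; case: (f a).
lia.
Qed.
Definition h1 k := if k <= 2 then 0 else k.*2 - 3.
Definition h2 k := if k <= 2 then k else k.*2 - 2.
Lemma ex_pt a k : 1 <= k -> ex a k = (a == h1 k) + (a == h2 k) :> nat.
Proof.
move=> hk; rewrite /ex /gA /h1 /h2.
case: (a =P 0) => [->|Ha] /=; case: (leqP k 2) => Hk /=.
- case: (k =P 1) => [->//|?]; case: (k =P 2) => [->//|?]; lia.
- case: (k =P 1) => [|?]; [lia|]; case: (k =P 2) => [|?]; [lia|].
  case: (0 =P k.*2 - 3) => [|?]; [lia|]; case: (0 =P k.*2 - 2) => [|?]; [lia|]; by [].
- rewrite orbF. case: ifP => Ha2.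
  + case: (k =P a) => [->|?]; case: (a =P 0); try lia; case: (a =P k); lia.
  + case: (k =P (a+3)./2) => [?|?]; case: (a =P 0); try lia; case: (a =P k); lia.
- rewrite orbF. case: ifP => Ha2.
  + case: (k =P a) => [?|?]; case: (a =P k.*2 - 3); case: (a =P k.*2-2); lia.
  + case: (k =P (a+3)./2) => [?|?]; case: (a =P k.*2 - 3); case: (a =P k.*2-2); lia.
Qed.

Lemma count_ts p k : 1 <= p -> 1 <= k <= p.+1 -> \sum_(a < p.*2.+1) ex a k = 2.
Proof.
move=> hp /andP[hk1 hk2].
rewrite (eq_bigr (fun a : 'I_p.*2.+1 => (nat_of_ord a == h1 k) + (nat_of_ord a == h2 k))).
  by rewrite big_split /= !sum_eqh /h1 /h2; case: ifP => ?; lia.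
by move=> a _; rewrite ex_pt.
Qed.

Lemma count_ag p a : 1 <= p -> a <= p.*2 -> \sum_(k < p.+1) ex a k.+1 = 1 + (a == 0).
Proof.
move=> hp ha.
case: (a =P 0) => [->|Ha].
  rewrite (eq_bigr (fun k : 'I_p.+1 => (nat_of_ord k == 0) + (nat_of_ord k == 1))).
    by rewrite big_split /= !sum_eqh; lia.
  by move=> k _; rewrite /ex /gA /=; case: (nat_of_ord k) => [|[|]].
rewrite (eq_bigr (fun k : 'I_p.+1 => nat_of_bool (nat_of_ord k == gA a - 1))).
  rewrite sum_eqh /gA. have -> : (a == 0) = false by apply/eqP.
  case: ifP => ?; lia.
move=> k _; rewrite /ex /gA.
case: (a =P 0) => // _ /=; rewrite ?andbF ?orbF.
case: ifP => ?; apply/eqP/eqP; lia.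
Qed.

Lemma allones p a : 1 <= p -> a <= p.*2 -> \sum_(k < p.+2) Dn a k 1 = p.
Proof.
move=> hp ha; rewrite big_ord_recl /=.
rewrite (eq_bigr (fun k : 'I_p.+1 => nat_of_bool (~~ ex a k.+1))); last first.
  by move=> k _; rewrite /Dn /=.
rewrite (@sum_bool_compl _ (fun k => ex a k.+1)) count_ag //.
rewrite /Dn /=; case: (a == 0) => /=; lia.
Qed.

Lemma sum_ts p (o : outcome 2 p.+2) : 1 <= p ->
  \sum_(a < p.*2.+1) \sum_(k < p.+2) Dn a k (o k) =
  1 + p.*2.-1 * \sum_(k < p.+1) (nat_of_ord (o (lift ord0 k)) == 1).
Proof.
move=> hp; rewrite exchange_big [LHS]big_ord_recl.
rewrite (eq_bigr (fun a : 'I_p.*2.+1 => nat_of_bool (nat_of_ord a == 0))); last by [].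
rewrite sum_eqh big_distrr /=; congr (_ + _).
apply: eq_bigr => k _.
rewrite /Dn /= /bump add1n.
case: (nat_of_ord (o (lift ord0 k)) == 1) => /=; last by rewrite big1 ?muln0.
rewrite (@sum_bool_compl _ (fun a => ex a k.+1)) count_ts //; first lia.
by have := ltn_ord k; lia.
Qed.

Lemma arith p d C : 1 <= p -> p.*2.+1 * d = 1 + p.*2.-1 * C -> p <= d.
Proof.
move=> hp h.
case: (leqP C d) => hc.
  have : p.*2.-1 * C <= p.*2.-1 * d by rewrite leq_mul2l hc orbT.
  nia.
have : p.*2.-1 * d.+1 <= p.*2.-1 * C by rewrite leq_mul2l hc orbT.
nia.
Qed.

Lemma pp_facts n : 3 <= n -> 1 <= pp n /\ (pp n).*2.+1 <= n.
Proof. rewrite /pp; lia. Qed.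

Lemma tau_id n a : a <= (pp n).*2 -> tau n a = a.
Proof. rewrite /tau; lia. Qed.

Lemma lower n (o : outcome 2 (pp n).+2) : 3 <= n -> equitable (@Dinst n) o ->
  forall i, pp n <= disutil (@Dinst n) o i.
Proof.
move=> hn heq i.
have [hp hN] := pp_facts n hn.
rewrite (heq i (Ordinal (leq_trans (ltn0Sn _) hN))).
set d := disutil _ _ _.
apply: (@arith (pp n) d (\sum_(k < (pp n).+1) (nat_of_ord (o (lift ord0 k)) == 1))) => //.
rewrite -sum_ts //.
rewrite -[X in X * d](card_ord ((pp n).*2.+1)) -sum_nat_const.
apply: eq_bigr => a _.
have Ha : a < n by apply: leq_trans (ltn_ord a) hN.
rewrite /d -(heq (Ordinal Ha)) disutil_eq /= tau_id //.
by have := ltn_ord a; lia.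
Qed.

Definition o1 n : outcome 2 (pp n).+2 := [ffun _ => Ordinal (isT : 1 < 2)].
Definition o0 n : outcome 2 (pp n).+2 := [ffun _ => Ordinal (isT : 0 < 2)].

Lemma o1_equi n : 3 <= n -> forall i, disutil (@Dinst n) (o1 n) i = pp n.
Proof.
move=> hn i; have [hp hN] := pp_facts n hn.
rewrite disutil_eq (eq_bigr (fun k : 'I_(pp n).+2 => nat_of_bool (Dn (tau n i) k 1))); last by move=> k _; rewrite ffunE.
by rewrite allones // /tau geq_minr.
Qed.

Lemma o0_d n : 3 <= n -> forall i : 'I_n, disutil (@Dinst n) (o0 n) i = (nat_of_ord i == 0).
Proof.
move=> hn i; have [hp hN] := pp_facts n hn.
rewrite disutil_eq big_ord_recl /= big1; last by move=> k _; rewrite ffunE /Dn.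
rewrite /Dn /= /tau addn0; apply/eqP/eqP; lia.
Qed.

Lemma d_ge1 n (o : outcome 2 (pp n).+2) (hn : 0 < n) :
  1 <= disutil (@Dinst n) o (Ordinal hn).
Proof.
rewrite disutil_eq big_ord_recl /=.
by rewrite /Dn /= /tau min0n /= leq_addr.
Qed.

Import Order.TTheory GRing.Theory Num.Theory.

Lemma key (W : objective) n : 4 <= n ->
  exists (m l : nat) (D : 'I_n -> 'I_l -> {set 'I_m}),
    (exists o : outcome m l, equitable D o) /\
    exists oopt : outcome m l,
      (forall o : outcome m l, (Wvalue W D oopt <= Wvalue W D o)%N) /\
      (Wvalue W D oopt = 1)%N /\
      forall o : outcome m l, equitable D o ->
        (n <= 4 * pp n)%N /\ (pp n <= Wvalue W D o)%N /\ (W = MinSum -> n * pp n <= Wvalue W D o)%N.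
Proof.
move=> hn4; have hn : 3 <= n by lia.
have hn0 : 0 < n by lia.
exists 2, (pp n).+2, (@Dinst n); split.
  by exists (o1 n) => i j; rewrite !o1_equi.
have Wo0 : Wvalue W (@Dinst n) (o0 n) = 1.
  case: W => /=.
    rewrite (eq_bigr (fun i : 'I_n => nat_of_bool (nat_of_ord i == 0))); last by move=> i _; rewrite o0_d.
    by rewrite sum_eqh hn0.
  apply/eqP; rewrite eqn_leq; apply/andP; split.
    by apply/bigmax_leqP => i _; rewrite o0_d //; case: (_ == _).
  apply: leq_trans (leq_bigmax_cond (F := fun i => disutil (@Dinst n) (o0 n) i) (Ordinal hn0) isT).
  by rewrite o0_d.
have Wge : forall o : outcome 2 (pp n).+2,
    disutil (@Dinst n) o (Ordinal hn0) <= Wvalue W (@Dinst n) o.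
  move=> o; case: W {Wo0} => /=.
    by rewrite (bigD1 (Ordinal hn0)) //= leq_addr.
  exact: (leq_bigmax_cond (F := fun i => disutil (@Dinst n) o i) (Ordinal hn0) isT).
exists (o0 n); split; [|split] => //.
  by move=> o; rewrite Wo0; apply: leq_trans (d_ge1 _ o hn0) (Wge o).
move=> o heq; split; first by rewrite /pp; lia.
split; first by apply: leq_trans (lower _ _ hn heq (Ordinal hn0)) (Wge o).
move=> hW; rewrite hW /=.
rewrite -[X in X * _](card_ord n) -sum_nat_const.
by apply: leq_sum => i _; apply: lower _ _ hn heq i.
Qed.

Theorem theorem13 :
  PoE_Omega MinSum (fun n => n ^ 2)%N /\ PoE_Omega MinMax (fun n => n).
Proof.
split; exists (1/4)%R, 4; (split; first by []); move=> n hn.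
- have [m [l [D [hE [oopt [hopt [h1 hl]]]]]]] := key MinSum n hn.
  exists m, l, D; split => //; exists oopt; split => //; rewrite h1; split => //.
  move=> o heq; have [h4 [hp hs]] := hl o heq.
  have := hs erefl => hs'.
  have H : (n ^ 2 <= 4 * Wvalue MinSum D o)%N.
    apply: leq_trans (_ : n * (4 * pp n) <= _)%N.
      by rewrite expnS expn1 leq_mul2l h4 orbT.
    by rewrite mulnCA leq_mul2l hs' orbT.
  have : ((n ^ 2)%:R <= (4 * Wvalue MinSum D o)%:R :> rat)%R by rewrite ler_nat.
  rewrite natrM; lra.
- have [m [l [D [hE [oopt [hopt [h1 hl]]]]]]] := key MinMax n hn.
  exists m, l, D; split => //; exists oopt; split => //; rewrite h1; split => //.
  move=> o heq; have [h4 [hp hs]] := hl o heq.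
  have H : (n <= 4 * Wvalue MinMax D o)%N.
    by apply: leq_trans h4 _; rewrite leq_mul2l hp orbT.
  have : (n%:R <= (4 * Wvalue MinMax D o)%:R :> rat)%R by rewrite ler_nat.
  rewrite natrM; lra.
Qed.
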